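(* Let $T$ be a phylogenetic tree on a leaf set $X$ with $|X|\ge4$, equipped with the quartet metrization $w$. Then $w(e)\ge|X|-2$ for every edge $e$ of $T$.
   Context: A phylogenetic tree on $X$ is an unrooted tree whose leaves are bijectively labeled by $X$ and all of whose non-leaf nodes have degree 3. Each internal edge $e$ determines a partition of $X$ into four nonempty blocks $X_1,X_2,X_3,X_4$, where $e$ induces the split $X_1\cup X_2|X_3\cup X_4$ and the four edges adjacent to $e$ induce splits each separating one $X_i$ from the rest; the quartet metrization assigns $w(e)=|X_1||X_2|+|X_3||X_4|$. Each pendant edge $e$ incident to leaf $x$ determines a tripartition $(\{x\},X_1,X_2)$, where $X_1,X_2$ are the leaf sets separated by the two other edges at the non-leaf end of $e$; the quartet metrization assigns $w(e)=|X_1||X_2|$. *)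

(* Defs.v *)
From mathcomp Require Import all_boot.
Set Implicit Arguments. Unset Strict Implicit. Unset Printing Implicit Defensive.

Definition acyclic (V : finType) (E : rel V) : Prop :=
  forall p : seq V, uniq p -> 2 < size p -> ~~ cycle E p.

Definition is_tree (V : finType) (E : rel V) : Prop :=
  [/\ symmetric E, irreflexive E, (forall x y, connect E x y) & acyclic E].

Definition deg (V : finType) (E : rel V) (v : V) : nat := #|[set w | E v w]|.

Definition is_leaf (V : finType) (E : rel V) (v : V) : bool := deg E v == 1.

Definition phylo_tree (V X : finType) (E : rel V) (lab : X -> V) : Prop :=
  [/\ is_tree E, injective lab,
      (forall v, is_leaf E v <-> exists x, lab x = v)
    & (forall v, ~~ is_leaf E v -> deg E v = 3)].

Definition del_edge (V : finType) (E : rel V) (u v : V) : rel V :=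
  [rel x y | E x y && ~~ (((x == u) && (y == v)) || ((x == v) && (y == u)))].

Definition split_side (V : finType) (E : rel V) (u a : V) : {set V} :=
  [set y | connect (del_edge E u a) a y].

Definition nlab (V X : finType) (lab : X -> V) (S : {set V}) : nat :=
  #|[set x | lab x \in S]|.

(* Contribution of endpoint u of edge {u,v}: for the (unique, if u is internal)
   pair {a,b} of other neighbours of u, |X_a| * |X_b|; 0 if u is a leaf. *)
Definition half_w (V X : finType) (E : rel V) (lab : X -> V) (u v : V) : nat :=
  \sum_(S : {set V} | (S \subset [set a | E u a] :\ v) && (#|S| == 2))
     \prod_(a in S) nlab lab (split_side E u a).

Definition quartet_w (V X : finType) (E : rel V) (lab : X -> V) (u v : V) : nat :=
  half_w E lab u v + half_w E lab v u.

(* Main.v *)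
Require Import Defs.
From mathcomp Require Import all_boot.
From mathcomp Require Import zify.
Set Implicit Arguments. Unset Strict Implicit. Unset Printing Implicit Defensive.

Section Aux.
Variables (V X : finType) (E : rel V) (lab : X -> V).

Lemma path_del u a x p : x != u -> u \notin p -> path E x p ->
  path (del_edge E u a) x p.
Proof.
elim: p x => [|y p IH] x //= xu; rewrite inE negb_or => /andP[yu up] /andP[exy pp].
rewrite IH 1?eq_sym // /del_edge /= exy /= (negbTE xu) /=.
by rewrite (eq_sym y) (negbTE yu) andbF.
Qed.

Lemma side_last u a p : uniq (u :: a :: p) -> path E a p ->
  last a p \in split_side E u a.
Proof.
rewrite /= inE negb_or => /andP[/andP[ua up] _] pth.
rewrite inE; apply/connectP; exists p => //.
by apply: path_del => //; rewrite eq_sym.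
Qed.

Hypothesis conn : forall x y, connect E x y.

Lemma first_step u y : y != u ->
  exists a p, [/\ E u a, path E a p, last a p = y & uniq (u :: a :: p)].
Proof.
move=> yu; case/connectP: (conn u y) => p pth yE.
move: yu; rewrite yE; case/shortenP: pth => p' pth' uq _.
case: p' pth' uq => [|a p'] /=; first by rewrite eqxx.
move=> /andP[Eua pth'] uq _; exists a, p'; split => //.
Qed.

Lemma cover2 u v y : y != u -> y != v ->
  (exists2 a, E u a && (a != v) & y \in split_side E u a) \/
  (exists2 c, E v c && (c != u) & y \in split_side E v c).
Proof.
move=> yu yv; have [a [p [Eua pth ly uq]]] := first_step yu.
have [av|av] := eqVneq a v; last first.
  by left; exists a; [rewrite Eua av | rewrite -ly; apply: side_last].
subst a; case: p pth ly uq => [|c p] /=; first by move=> _ vy; rewrite vy eqxx in yv.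
move=> /andP[Evc pth] ly uq; right; exists c.
  rewrite Evc /=; move: uq; rewrite !inE !negb_or => /andP[/and3P[_ cu _] _].
  by rewrite eq_sym.
rewrite -ly; apply: side_last => //; by case/andP: uq.
Qed.

Hypothesis irr : irreflexive E.
Hypothesis acyc : acyclic E.
Hypothesis leafP : forall v, is_leaf E v <-> exists x, lab x = v.
Hypothesis degP : forall v, ~~ is_leaf E v -> deg E v = 3.

Lemma size_uniq (q : seq V) : uniq q -> size q <= #|V|.
Proof. by move/card_uniqP <-; apply: max_card. Qed.

Lemma leaf_side_aux u a k : forall p, uniq (u :: a :: p) -> path E u (a :: p) ->
  #|V| - size p <= k -> exists x, lab x \in split_side E u a.
Proof.
elim: k => [|k IH] p uq pth hk.
all: set z := last a p.
all: have hsz := size_uniq uq; rewrite /= in hsz.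
all: case: (boolP (is_leaf E z)) => [lz | nlz].
- by case/leafP: lz => x hx; exists x; rewrite hx; apply: side_last => //; case/andP: pth.
- exfalso; move: hk hsz; set N := #|V|; set M := size p; lia.
- by case/leafP: lz => x hx; exists x; rewrite hx; apply: side_last => //; case/andP: pth.
- case: (boolP [exists w, E z w && (w \notin u :: a :: p)]).
    case/existsP => w /andP[Ezw wq].
    apply: (IH (rcons p w)).
    + by rewrite -!rcons_cons rcons_uniq wq.
    + by rewrite -rcons_cons rcons_path pth.
    + have := size_uniq (q := u :: a :: rcons p w).
      rewrite -!rcons_cons rcons_uniq wq uq /= size_rcons => /(_ isT) h.
      move: h hk; set N := #|V|; set M := size p; lia.
  rewrite negb_exists => /forallP allin.
  exfalso.
  set q := u :: a :: p in allin uq pth.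
  set t := nth u q (size q - 2).
  have hN := degP nlz; rewrite /deg in hN.
  have : 0 < #|[set w | E z w] :\ t|.
    by move: hN; rewrite (cardsD1 t); case: (t \in _) => /=; lia.
  case/card_gt0P => w; rewrite !inE => /andP[wt Ezw].
  have wq : w \in q by move: (allin w); rewrite Ezw /= negbK.
  have wz : w != z by apply/eqP => wz; rewrite wz irr in Ezw.
  set i := index w q.
  have hi : i < size q by rewrite index_mem.
  have nw : nth u q i = w by rewrite nth_index.
  have hlast : nth u q (size q).-1 = z by rewrite nth_last.
  have i1 : i != (size q).-1 by apply/eqP => e; rewrite -nw e hlast eqxx in wz.
  have i2 : i != size q - 2 by apply/eqP => e; rewrite -nw e eqxx in wt.
  have hr := drop_nth u hi; rewrite nw in hr.
  have Hu : uniq (drop i q) by apply: drop_uniq.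
  have Hs : 2 < size (drop i q).
    rewrite size_drop. rewrite /q /= in hi i1 i2 *. move: hi i1 i2; set M := size p; lia.
  have := acyc Hu Hs; apply/negP.
  rewrite hr /= rcons_path.
    have sq : sorted E q by [].
    have := drop_sorted i sq; rewrite hr /= => ->.
    have : last u q = z by [].
    rewrite -(cat_take_drop i q) last_cat hr /= => ->.
    by rewrite negbK.
Qed.

Lemma leaf_side u a : E u a -> 0 < nlab lab (split_side E u a).
Proof.
move=> Eua.
have h1 : uniq [:: u; a].
  by rewrite /= inE andbT; apply/eqP => e; rewrite e irr in Eua.
have h2 : path E u [:: a] by rewrite /= Eua.
have [x hx] := @leaf_side_aux u a #|V| [::] h1 h2 (leq_subr _ _).
by apply/card_gt0P; exists x; rewrite inE.
Qed.

Lemma leaf_nbr u v a : is_leaf E u -> E u v -> E u a -> a = v.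
Proof.
rewrite /is_leaf /deg => /cards1P[z hz] Euv Eua.
have : v \in [set w | E u w] by rewrite inE.
have : a \in [set w | E u w] by rewrite inE.
by rewrite hz !inE => /eqP -> /eqP ->.
Qed.

Lemma card_lab1 w : injective lab -> #|[set x | lab x == w]| <= 1.
Proof.
move=> inj; apply/card_le1_eqP => x y; rewrite !inE => /eqP hx /eqP hy.
by apply: inj; rewrite hx hy.
Qed.

Lemma nbrs2 u v : E u v -> deg E u = 3 ->
  exists a b, a != b /\ [set w | E u w] :\ v = [set a; b].
Proof.
move=> Euv; rewrite /deg (cardsD1 v) inE Euv => h.
by apply/cards2P; apply/eqP; lia.
Qed.

Lemma half_ge u v a b : a != b -> [set w | E u w] :\ v = [set a; b] ->
  nlab lab (split_side E u a) * nlab lab (split_side E u b) <= half_w E lab u v.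
Proof.
move=> ab hS; rewrite /half_w (bigD1 [set a; b]) /=; last first.
  by rewrite hS subxx cards2 ab.
rewrite big_setU1 /=; last by rewrite inE.
by rewrite big_set1 leq_addr.
Qed.


Lemma in_nbr2 u v a b a' : [set w | E u w] :\ v = [set a; b] ->
  E u a' -> a' != v -> a' = a \/ a' = b.
Proof.
move=> hS Ea av.
have : a' \in [set w | E u w] :\ v by rewrite !inE av Ea.
by rewrite hS !inE => /orP[/eqP|/eqP]; auto.
Qed.

Lemma nbr_of u v a b : [set w | E u w] :\ v = [set a; b] -> E u a /\ E u b.
Proof.
move=> hS; have : a \in [set w | E u w] :\ v by rewrite hS set21.
have : b \in [set w | E u w] :\ v by rewrite hS set22.
by rewrite !inE => /andP[_ ->] /andP[_ ->].
Qed.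

Hypothesis sym : symmetric E.
Hypothesis inj : injective lab.

Lemma lab_nonleaf x w : ~~ is_leaf E w -> lab x != w.
Proof.
move=> nl; apply/eqP => e; move: nl; rewrite (_ : is_leaf E w) //.
by apply/leafP; exists x.
Qed.

Lemma leaf_int u v : is_leaf E u -> ~~ is_leaf E v -> E u v ->
  #|X| - 2 <= half_w E lab v u.
Proof.
move=> lu nlv Euv; have Evu : E v u by rewrite sym.
have [c [d [cd hS]]] := nbrs2 Evu (degP nlv).
have hw := half_ge cd hS.
have [Evc Evd] := nbr_of hS.
have pc := leaf_side Evc; have pd := leaf_side Evd.
have [x0 hx0] := (iffLR (leafP u)) lu.
set C := [set x | lab x \in split_side E v c].
set D := [set x | lab x \in split_side E v d].
have sub : [set: X] \subset x0 |: (C :|: D).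
  apply/subsetP => x _; rewrite !inE.
  have [->|xx0] := eqVneq x x0; first by [].
  have xu : lab x != u by rewrite -hx0; apply: contra xx0 => /eqP/inj ->.
  have xv := lab_nonleaf x nlv.
  case: (cover2 xu xv) => [[a' /andP[Ea av] _]|[c' /andP[Ec cu] hin]].
    by rewrite (leaf_nbr lu Euv Ea) eqxx in av.
  by case: (in_nbr2 hS Ec cu) => e; move: hin; rewrite -e inE => ->; rewrite ?orbT.
have := subset_leq_card sub; rewrite cardsT cardsU1 cardsU.
move: hw pc pd; rewrite /nlab -/C -/D.
set N := #|X|; set yc := #|C|; set yd := #|D|; set I := #|C :&: D|.
set h := half_w _ _ _ _.
case: (x0 \notin _); nia.
Qed.

Lemma int_int u v : ~~ is_leaf E u -> ~~ is_leaf E v -> E u v ->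
  #|X| - 2 <= quartet_w E lab u v.
Proof.
move=> nlu nlv Euv; have Evu : E v u by rewrite sym.
have [a [b [ab hSu]]] := nbrs2 Euv (degP nlu).
have [c [d [cd hS]]] := nbrs2 Evu (degP nlv).
have hw1 := half_ge ab hSu; have hw2 := half_ge cd hS.
have [Eua Eub] := nbr_of hSu; have [Evc Evd] := nbr_of hS.
have pa := leaf_side Eua; have pb := leaf_side Eub.
have pc := leaf_side Evc; have pd := leaf_side Evd.
set A := [set x | lab x \in split_side E u a].
set B := [set x | lab x \in split_side E u b].
set C := [set x | lab x \in split_side E v c].
set D := [set x | lab x \in split_side E v d].
have sub : [set: X] \subset (A :|: B) :|: (C :|: D).
  apply/subsetP => x _; rewrite !inE.
  have xu := lab_nonleaf x nlu; have xv := lab_nonleaf x nlv.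
  case: (cover2 xu xv) => [[a' /andP[Ea av] hin]|[c' /andP[Ec cu] hin]].
    by case: (in_nbr2 hSu Ea av) => e; move: hin; rewrite -e inE => ->; rewrite ?orbT.
  by case: (in_nbr2 hS Ec cu) => e; move: hin; rewrite -e inE => ->; rewrite ?orbT.
have := subset_leq_card sub; rewrite cardsT !cardsU.
move: hw1 hw2 pa pb pc pd; rewrite /quartet_w /nlab -/A -/B -/C -/D.
set N := #|X|; set xa := #|A|; set xb := #|B|; set yc := #|C|; set yd := #|D|.
set h1 := half_w _ _ u v; set h2 := half_w _ _ v u.
set I1 := #|A :&: B|; set I2 := #|C :&: D|; set I3 := #|_ :&: _|.
nia.
Qed.

Lemma leaf_leaf u v : is_leaf E u -> is_leaf E v -> E u v -> #|X| <= 2.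
Proof.
move=> lu lv Euv; have Evu : E v u by rewrite sym.
have sub : [set: X] \subset [set x | lab x == u] :|: [set x | lab x == v].
  apply/subsetP => x _; rewrite !inE.
  have [//|xu] := eqVneq (lab x) u; have [//|xv] := eqVneq (lab x) v.
  case: (cover2 xu xv) => [[a' /andP[Ea av] _]|[c' /andP[Ec cu] _]].
    by rewrite (leaf_nbr lu Euv Ea) eqxx in av.
  by rewrite (leaf_nbr lv Evu Ec) eqxx in cu.
have := subset_leq_card sub; rewrite cardsT cardsU.
have := card_lab1 u inj; have := card_lab1 v inj.
set N := #|X|; set I := #|_ :&: _|; lia.
Qed.
End Aux.

Theorem proposition2p11 (V X : finType) (E : rel V) (lab : X -> V) :
  phylo_tree E lab -> 4 <= #|X| ->
  forall u v : V, E u v -> #|X| - 2 <= quartet_w E lab u v.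
Proof.
move=> [[sym irr conn acyc] inj leafP degP] n4 u v Euv.
have Evu : E v u by rewrite sym.
case: (boolP (is_leaf E u)) => lu; case: (boolP (is_leaf E v)) => lv.
- by have := leaf_leaf conn sym inj lu lv Euv; lia.
- by have := leaf_int conn irr acyc leafP degP sym inj lu lv Euv; rewrite /quartet_w; lia.
- by have := leaf_int conn irr acyc leafP degP sym inj lv lu Evu; rewrite /quartet_w; lia.
- have h := int_int conn irr acyc leafP degP sym lu lv Euv. exact: h.
Qed.
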